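(* Let $D$ be a digraph, let $S\subseteq V(D)$ be a nonempty set of vertices of in-degree $0$ in $D$, and let $T\subseteq V(D)$ with $T\cap S=\emptyset$. If $d^+(v)\ge \Delta^-(D)$ for every $v\in V(D)\setminus T$, then there exist $|S|$ vertex-disjoint directed paths in $D$, each starting in $S$ and ending in $T$.
   Context: $d^+(v)$ is the out-degree of $v$ and $\Delta^-(D)$ is the maximum in-degree of $D$. *)

(* Defs.v *)
From mathcomp Require Import all_boot.
Set Implicit Arguments. Unset Strict Implicit. Unset Printing Implicit Defensive.

(* A digraph on a finite vertex type V is a (loopless) arc relation e : rel V;
   e u v means there is an arc u -> v. *)

Definition outdeg (V : finType) (e : rel V) (v : V) : nat := #|[set y | e v y]|.
Definition indeg (V : finType) (e : rel V) (v : V) : nat := #|[set u | e u v]|.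
Definition maxindeg (V : finType) (e : rel V) : nat := \max_(v : V) indeg e v.

(* a directed path x = v0 -> v1 -> ... -> vk (p = [:: v1; ...; vk]),
   with pairwise distinct vertices *)
Definition dipath (V : finType) (e : rel V) (x : V) (p : seq V) : bool :=
  path e x p && uniq (x :: p).

(* Main.v *)
Require Import Defs.
From mathcomp Require Import all_boot zify.
Set Implicit Arguments. Unset Strict Implicit. Unset Printing Implicit Defensive.

Definition nbh (T0 : finType) (r : rel T0) (B : {set T0}) : {set T0} :=
  [set y | [exists x in B, r x y]].

Lemma hall_ind (T0 : finType) n : forall (A : {set T0}) (r : rel T0),
  #|A| <= n -> (forall B : {set T0}, B \subset A -> #|B| <= #|nbh r B|) ->
  exists f : T0 -> T0, (forall x, x \in A -> r x (f x)) /\ {in A &, injective f}.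
Proof.
elim: n => [|n IH] A r hA hH.
  move: hA; rewrite leqn0 cards_eq0 => /eqP ->.
  by exists id; split => [x|x y]; rewrite inE.
case: (boolP [exists B : {set T0}, [&& B \proper A, B != set0 & #|nbh r B| <= #|B|]]).
  case/existsP => B /and3P [pBA nB0 cB].
  have sBA := proper_sub pBA.
  have ltB : #|B| < #|A| := proper_card pBA.
  have hB : #|B| <= n by lia.
  have [f1 [f1r f1i]] := IH B r hB (fun C sC => hH C (subset_trans sC sBA)).
  pose r2 := fun x y => r x y && (y \notin nbh r B).
  have H2 : forall C : {set T0}, C \subset A :\: B -> #|C| <= #|nbh r2 C|.
    move=> C sC.
    have eqN : nbh r2 C = nbh r C :\: nbh r B.
      apply/setP => y; rewrite in_setD [y \in nbh r2 C]inE /r2.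
      case: (y \in nbh r B) => /=; rewrite ?inE.
        by apply/negbTE/existsPn => x; rewrite andbF andbF.
      by apply/existsP/existsP => [[x /andP[xC /andP[rxy _]]]|[x /andP[xC rxy]]];
        exists x; rewrite xC //= /r2 rxy.
    have nU : nbh r (B :|: C) = nbh r B :|: nbh r C.
      apply/setP => y; rewrite !inE.
      apply/existsP/orP => [[x /andP[]]|[/existsP[x /andP[xB rxy]]|/existsP[x /andP[xB rxy]]]].
      - rewrite inE => /orP[xB|xC] rxy; [left|right]; apply/existsP; exists x; rewrite ?xB ?xC //.
      - by exists x; rewrite inE xB.
      - by exists x; rewrite inE xB orbT.
    have sCA : C \subset A := subset_trans sC (subsetDl A B).
    have sBC : B :|: C \subset A by rewrite subUset sBA sCA.
    have hBC := hH (B :|: C) sBC.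
    have BC0 : B :&: C = set0.
      apply/setP=> x; rewrite !inE; case xB: (x \in B) => //=.
      apply/negbTE/negP => xC; have := subsetP sC x xC; by rewrite !inE xB.
    have := cardsUI B C; rewrite BC0 cards0.
    have := cardsUI (nbh r B) (nbh r C).
    have := cardsD (nbh r C) (nbh r B).
    rewrite eqN -nU setIC.
    lia.
  have hAB : #|A :\: B| <= n.
    rewrite cardsDS //.
    have : 0 < #|B| by rewrite card_gt0.
    lia.
  have [f2 [f2r f2i]] := IH (A :\: B) r2 hAB H2.
  exists (fun x => if x \in B then f1 x else f2 x); split.
    move=> x xA; case: ifP => xB; first exact: f1r.
    by have := f2r x; rewrite inE xB xA => /(_ isT) /andP[].
  have f1N : forall x, x \in B -> f1 x \in nbh r B.
    by move=> x xB; rewrite inE; apply/existsP; exists x; rewrite xB f1r.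
  have f2N : forall x, x \in A -> x \notin B -> f2 x \notin nbh r B.
    by move=> x xA xB; have := f2r x; rewrite inE xB xA => /(_ isT) /andP[].
  move=> x y xA yA /=; case: ifP => xB; case: ifP => yB.
  - exact: f1i.
  - by move=> E; have := f2N y yA (negbT yB); rewrite -E f1N.
  - by move=> E; have := f2N x xA (negbT xB); rewrite E f1N.
  - by apply: f2i; rewrite inE ?xB ?yB.
rewrite negb_exists => /forallP hN.
case: (set_0Vmem A) => [A0 | [a aA]].
  by rewrite A0; exists id; split => [x|x y]; rewrite inE.
have : 0 < #|nbh r [set a]|.
  by have := hH [set a]; rewrite sub1set aA cards1 => /(_ isT).
rewrite card_gt0 => /set0Pn [b]; rewrite inE => /existsP [a' /andP[]].
rewrite inE => /eqP -> rab.
pose r' := fun x y => r x y && (y != b).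
have hA' : #|A :\ a| <= n by move: hA; rewrite (cardsD1 a A) aA.
have H' : forall C : {set T0}, C \subset A :\ a -> #|C| <= #|nbh r' C|.
  move=> C sC.
  case: (set_0Vmem C) => [-> | [c cC]]; first by rewrite cards0.
  have sCA : C \subset A := subset_trans sC (subsetDl A _).
  have aC : a \notin C.
    by apply/negP => aC; have := subsetP sC a aC; rewrite !inE eqxx.
  have pC : C \proper A.
    rewrite properE sCA /=; apply/negP => /subsetP/(_ a aA); by rewrite (negbTE aC).
  have := hN C; rewrite pC /=.
  have -> : C != set0 by apply/set0Pn; exists c.
  rewrite /= -ltnNge => ltC.
  have eqN : nbh r' C = nbh r C :\ b.
    apply/setP => y; rewrite !inE.
    case: (y =P b) => [-> | nyb] /=.
      by apply/negbTE/existsPn => x; rewrite /r' eqxx !andbF.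
    by apply/existsP/existsP => [[x /andP[xC /andP[rxy _]]]|[x /andP[xC rxy]]];
      exists x; rewrite xC //= /r' rxy; apply/eqP.
  rewrite eqN.
  have := cardsD1 b (nbh r C).
  case: (b \in nbh r C) => /=; lia.
have [f' [f'r f'i]] := IH (A :\ a) r' hA' H'.
exists (fun x => if x == a then b else f' x); split.
  move=> x xA; case: eqP => [-> // | nxa].
  by have := f'r x; rewrite !inE xA andbT => /(_ (introN eqP nxa)) /andP[].
have f'b : forall x, x \in A -> x != a -> f' x != b.
  by move=> x xA xa; have := f'r x; rewrite !inE xA xa => /(_ isT) /andP[].
move=> x y xA yA /=; case: eqP => xa; case: eqP => ya.
- by rewrite xa ya.
- by move=> E; have := f'b y yA (introN eqP ya); rewrite -E eqxx.
- by move=> E; have := f'b x xA (introN eqP xa); rewrite E eqxx.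
- by apply: f'i; rewrite !inE ?xA ?yA andbT; apply/eqP.
Qed.

Lemma card_sum (V : finType) (P : pred V) : #|[set y | P y]| = \sum_y (P y : nat).
Proof.
rewrite -sum1_card big_mkcond /=; apply: eq_bigr => y _; rewrite inE; by case: (P y).
Qed.

Lemma path_traj (V : finType) (e : rel V) (f : V -> V) x n :
  (forall k, k < n -> e (iter k f x) (iter k.+1 f x)) -> path e x (traject f (f x) n).
Proof.
elim: n x => [|n IH] x h //=.
rewrite (h 0 (ltn0Sn n)) /=; apply: IH => k hk; rewrite -!iterSr; exact: h k.+1 hk.
Qed.

Theorem lemma22 (V : finType) (e : rel V) (Hloopless : irreflexive e)
    (S T : {set V}) (HS0 : S != set0)
    (HSin : forall s, s \in S -> indeg e s = 0)
    (HST : [disjoint S & T])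
    (Hdeg : forall v, v \notin T -> maxindeg e <= outdeg e v)
    (Harc : 0 < maxindeg e) :
  exists P : 'I_#|S| -> V * seq V,
    (forall i, [/\ dipath e (P i).1 (P i).2, (P i).1 \in S
                 & last (P i).1 (P i).2 \in T]) /\
    (forall i j, i != j ->
       [disjoint ((P i).1 :: (P i).2) & ((P j).1 :: (P j).2)]).
Proof.
have sN : forall s u, s \in S -> ~~ e u s.
  move=> s u sS; move/eqP: (HSin s sS); rewrite /indeg cards_eq0 => /eqP E.
  by have := in_set0 u; rewrite -E inE => ->.
have hallc : forall B : {set V}, B \subset ~: T -> #|B| <= #|nbh e B|.
  move=> B sB.
  rewrite -(leq_pmul2l Harc).
  apply: (@leq_trans (\sum_(x in B) outdeg e x)).
    rewrite mulnC -sum_nat_const; apply: leq_sum => x xB.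
    by apply: Hdeg; have := subsetP sB x xB; rewrite inE.
  rewrite /outdeg; under eq_bigr do rewrite card_sum.
  rewrite exchange_big /=.
  apply: (@leq_trans (\sum_y ((y \in nbh e B) * maxindeg e))).
    apply: leq_sum => y _.
    case yN: (y \in nbh e B).
      rewrite mul1n; apply: (@leq_trans (indeg e y)); last by rewrite /maxindeg; exact: leq_bigmax.
      rewrite /indeg card_sum big_mkcond /=; apply: leq_sum => x _.
      by case: (x \in B); case: (e x y).
    rewrite mul0n leqn0; apply/eqP; apply: big1 => x xB.
    case exy: (e x y) => //.
    by move: yN; rewrite inE; move/negbT/existsPn => /(_ x); rewrite xB exy.
  rewrite mulnC -sum_nat_const [X in _ <= X]big_mkcond /=; apply: eq_leq; apply: eq_bigr => y _.
  by case: (y \in nbh e B); rewrite ?mul1n ?mul0n.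
have [f [fe fi]] := hall_ind (leqnn #|~: T|) hallc.
have key : forall i j s s', s \in S -> s' \in S ->
    (forall k, k < i -> iter k f s \notin T) -> (forall k, k < j -> iter k f s' \notin T) ->
    iter i f s = iter j f s' -> i = j /\ s = s'.
  elim=> [|i IH] [|j] s s' sS s'S hi hj //=.
  - move=> E; have := sN s (iter j f s') sS.
    by rewrite E fe // inE (hj j (ltnSn j)).
  - move=> E; have := sN s' (iter i f s) s'S.
    by rewrite -E fe // inE (hi i (ltnSn i)).
  - move=> E; have E2 := fi _ _ _ _ E.
    have [|||->->] // := IH j s s' sS s'S.
    + by move=> k hk; apply: hi; apply: ltnW.
    + by move=> k hk; apply: hj; apply: ltnW.
    + by apply: E2; rewrite inE ?(hi i (ltnSn i)) ?(hj j (ltnSn j)).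
have hit : forall s, s \in S -> exists n,
    (forall k, k < n -> iter k f s \notin T) /\ iter n f s \in T.
  move=> s sS.
  have hex : exists n, iter n f s \in T.
    case: (boolP [exists k : 'I_#|V|.+1, iter k f s \in T]) => [/existsP [k hk]|/existsPn hn].
      by exists k.
    have : #|'I_#|V|.+1| <= #|V|.
      apply: (@leq_card _ _ (fun k : 'I_#|V|.+1 => iter k f s)).
      move=> k1 k2 E; apply: val_inj.
      have [] // := key k1 k2 s s sS sS _ _ E.
      + by move=> k hk; exact: hn (Ordinal (ltn_trans hk (ltn_ord k1))).
      + by move=> k hk; exact: hn (Ordinal (ltn_trans hk (ltn_ord k2))).
    by rewrite card_ord ltnn.
  case: (ex_minnP hex) => n hn hmin; exists n; split => // k hk.
  by apply/negP => hkT; have := hmin k hkT; rewrite leqNgt hk.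
have [nf hnf] := fin_all_exists (fun i : 'I_#|S| => hit (enum_val i) (enum_valP i)).
exists (fun i => (enum_val i, traject f (f (enum_val i)) (nf i))); split.
  move=> i /=; have [hb hT] := hnf i.
  split; [|exact: enum_valP|by rewrite last_traject].
  rewrite /dipath; apply/andP; split.
    apply: path_traj => k hk; rewrite iterS; apply: fe; rewrite inE; exact: hb.
  rewrite -trajectS looping_uniq /looping; apply/negP => /trajectP [k hk E].
  have [] := key _ _ _ _ (enum_valP i) (enum_valP i) hb _ E.
    by move=> k' hk'; apply: hb; apply: ltn_trans hk' hk.
  by move=> Enk; rewrite Enk ltnn in hk.
move=> i j nij /=; rewrite -!trajectS disjoint_subset; apply/subsetP => x /trajectP [a ha ->].
rewrite inE; apply/negP => /trajectP [b hb E].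
have [_ E'] := key a b _ _ (enum_valP i) (enum_valP j)
  (fun k hk => (hnf i).1 k (leq_trans hk ha)) (fun k hk => (hnf j).1 k (leq_trans hk hb)) E.
by move: nij; rewrite (enum_val_inj E') eqxx.
Qed.
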